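(* For every $n\ge1$, every integer $r\ge 0$, every $\lambda\ge 0$, every $y\in\mathbb{R}^n$ and every $i\in[n]$, $$\max_{J\in\mathcal{I}:\, i\in J}\ \min_{I\in\mathcal{I}:\, i\in I,\ I\subseteq J}\Big[(P^{(|I|,r)}y_I)_i+\frac{\lambda C_{I,J}}{|I|}\Big]\ \le\ \min_{J\in\mathcal{I}:\, i\in J}\ \max_{I\in\mathcal{I}:\, i\in I,\ I\subseteq J}\Big[(P^{(|I|,r)}y_I)_i-\frac{\lambda C_{I,J}}{|I|}\Big].$$
   Context: $[n]=\{1,\dots,n\}$. An interval of $[n]$ is $[a:b]=\{a,\dots,b\}$ with $1\le a\le b\le n$; $\mathcal{I}$ is the set of all intervals of $[n]$. For $v\in\mathbb{R}^n$ and an interval $I$, $v_I\in\mathbb{R}^{|I|}$ is the restriction of $v$ to $I$. For an interval $I=[a:b]$ and integer $r\ge0$, let $S^{(I,r)}=\{(p(a/n),p((a+1)/n),\dots,p(b/n)) : p \text{ a real polynomial of degree at most } r\}\subseteq\mathbb{R}^{|I|}$; this subspace depends only on $|I|$, and $P^{(|I|,r)}$ denotes the orthogonal projection matrix onto it. For $i\in I$, $(P^{(|I|,r)}y_I)_i$ denotes the entry of the vector $P^{(|I|,r)}y_I$ at the position corresponding to $i$ (i.e. position $i-a+1$). For intervals $I\subseteq J$ with $J=[j_1:j_2]$: $C_{I,J}=1$ if $I$ contains neither $j_1$ nor $j_2$; $C_{I,J}=-1$ if $I=J$; $C_{I,J}=0$ otherwise. *)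

(* Defs.v *)
From HB Require Import structures.
From mathcomp Require Import all_boot all_order all_algebra.
From mathcomp Require Import reals.
From Stdlib Require Import ClassicalEpsilon.
Set Implicit Arguments. Unset Strict Implicit. Unset Printing Implicit Defensive.
Import Order.TTheory GRing.Theory Num.Theory.
Local Open Scope ring_scope.

Section Defs.
Variable R : realType.

(* 1-based access to a row vector; 0 outside the range. *)
Definition vat (m : nat) (v : 'rV[R]_m) (j : nat) : R :=
  odflt 0 (omap (v 0) (insub j.-1 : option 'I_m)).

(* Interval [a:b] of [n] is encoded by the pair (a,b); its length is b-a+1. *)
Definition ilen (I : nat * nat) : nat := (I.2 - I.1).+1.

Definition in_int (i : nat) (I : nat * nat) : bool := (I.1 <= i <= I.2)%N.

Definition sub_int (I J : nat * nat) : bool := (J.1 <= I.1)%N && (I.2 <= J.2)%N.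

Definition intervals (n : nat) : seq (nat * nat) :=
  [seq ab <- [seq (a, b) | a <- iota 1 n, b <- iota 1 n] | (ab.1 <= ab.2)%N].

(* S^{(I,r)} for I = [a:b] (m = |I|): vectors (p(a/n), ..., p(b/n)), deg p <= r. *)
Definition in_polyS (n a r m : nat) (v : 'rV[R]_m) : Prop :=
  exists p : {poly R}, (size p <= r.+1)%N /\
    forall k : 'I_m, v 0 k = p.[(a + k)%:R / n%:R].

Definition dotv (m : nat) (u v : 'rV[R]_m) : R := \sum_(k < m) u 0 k * v 0 k.

Definition orth_proj (n a r m : nat) (y : 'rV[R]_m) : 'rV[R]_m :=
  epsilon (inhabits 0)
    (fun z => in_polyS n a r z /\
       forall s, in_polyS n a r s -> dotv (y - z) s = 0).

Definition restr (n : nat) (y : 'rV[R]_n) (I : nat * nat) : 'rV[R]_(ilen I) :=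
  \row_(k < ilen I) vat y (I.1 + k).

(* (P^{(|I|,r)} y_I)_i, i given as an index of [n] (position i - a + 1 in the vector). *)
Definition projI (n r : nat) (y : 'rV[R]_n) (I : nat * nat) (i : nat) : R :=
  vat (orth_proj n I.1 r (restr y I)) (i - I.1).+1.

Definition CIJ (I J : nat * nat) : R :=
  if ~~ in_int J.1 I && ~~ in_int J.2 I then 1
  else if I == J then -1 else 0.

Definition seqmax (s : seq R) : R := foldr Num.max (head 0 s) (behead s).
Definition seqmin (s : seq R) : R := foldr Num.min (head 0 s) (behead s).

End Defs.
Arguments CIJ {R}.

(* Main.v *)
Require Import Defs.
From HB Require Import structures.
From mathcomp Require Import all_boot all_order all_algebra.
From mathcomp Require Import reals.
From mathcomp Require Import zify ring lra.
Import Order.TTheory GRing.Theory Num.Theory.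
Local Open Scope ring_scope.

Lemma C_sum (R : realType) (a b a' b' : nat) :
  (a <= b)%N -> (a' <= b')%N -> (maxn a a' <= minn b b')%N ->
  CIJ (maxn a a', minn b b') (a, b) + CIJ (maxn a a', minn b b') (a', b') <= 0 :> R.
Proof.
move=> h1 h2 h3; rewrite /CIJ /in_int /= !xpair_eqE.
case: ifP => H1; case: ifP => H2; try (case: ifP => H3); try (case: ifP => H4);
  rewrite ?addr0 ?add0r ?lerN10 ?ler10 //; try lra; exfalso; lia.
Qed.

Section S.
Variable R : realType.
Lemma fmax_ge (h : R) t : h <= foldr Num.max h t /\ forall x, x \in t -> x <= foldr Num.max h t.
Proof.
elim: t => [|z t [IH1 IH2]] //=; split.
  by rewrite le_max IH1 orbT.
move=> x; rewrite inE => /orP [/eqP ->|/IH2 H]; first by rewrite le_max lexx.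
by rewrite le_max H orbT.
Qed.
Lemma fmin_le (h : R) t : foldr Num.min h t <= h /\ forall x, x \in t -> foldr Num.min h t <= x.
Proof.
elim: t => [|z t [IH1 IH2]] //=; split.
  by rewrite ge_min IH1 orbT.
move=> x; rewrite inE => /orP [/eqP ->|/IH2 H]; first by rewrite ge_min lexx.
by rewrite ge_min H orbT.
Qed.
Lemma fmax_mem (h : R) t : foldr Num.max h t \in h :: t.
Proof.
elim: t => [|z t IH] /=; first by rewrite inE.
case: (leP z (foldr Num.max h t)) => _.
  by move: IH; rewrite !inE => /orP [->|->]; rewrite ?orbT.
by rewrite !inE eqxx orbT.
Qed.
Lemma fmin_mem (h : R) t : foldr Num.min h t \in h :: t.
Proof.
elim: t => [|z t IH] /=; first by rewrite inE.
case: (leP z (foldr Num.min h t)) => _.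
  by rewrite !inE eqxx orbT.
by move: IH; rewrite !inE => /orP [->|->]; rewrite ?orbT.
Qed.
Lemma seqmax_mem (s : seq R) : s != [::] -> seqmax s \in s.
Proof. by case: s => // h t _; apply: fmax_mem. Qed.
Lemma seqmin_mem (s : seq R) : s != [::] -> seqmin s \in s.
Proof. by case: s => // h t _; apply: fmin_mem. Qed.
Lemma seqmax_ge (s : seq R) x : x \in s -> x <= seqmax s.
Proof.
case: s => // h t; rewrite inE /seqmax /= => /orP [/eqP ->|H].
  by case: (fmax_ge h t).
by case: (fmax_ge h t) => _; apply.
Qed.
Lemma seqmin_le (s : seq R) x : x \in s -> seqmin s <= x.
Proof.
case: s => // h t; rewrite inE /seqmin /= => /orP [/eqP ->|H].
  by case: (fmin_le h t).
by case: (fmin_le h t) => _; apply.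
Qed.
End S.

Lemma mem_intervals n (a b : nat) : ((a, b) \in intervals n) = [&& (1 <= a)%N, (a <= b)%N & (b <= n)%N].
Proof.
rewrite /intervals mem_filter /=.
apply/andP/idP.
  case=> h /allpairsP [[x z] /= [hx hz [Ea Eb]]]; subst x z.
  move: hx hz; rewrite !mem_iota => hx hz; apply/and3P; split; lia.
move=> /and3P [h1 h2 h3]; split => //.
apply/allpairsP; exists (a, b) => /=; rewrite !mem_iota; split => //; lia.
Qed.

Lemma maxmin (R : realType) (X : eqType) (S : seq X) (f g : X -> R) :
  S != [::] -> (forall a b, a \in S -> b \in S -> f a <= g b) ->
  seqmax [seq f x | x <- S] <= seqmin [seq g x | x <- S].
Proof.
move=> ne H.
have ne' : forall h : X -> R, [seq h x | x <- S] != [::] by move=> h; case: S ne {H}.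
have /mapP [a ha ->] := seqmax_mem _ _ (ne' f).
have /mapP [b hb ->] := seqmin_mem _ _ (ne' g).
exact: H.
Qed.

Theorem lemma1 (R : realType) (n r : nat) (lam : R) (y : 'rV[R]_n) (i : nat) :
  (0 < n)%N -> 0 <= lam -> (1 <= i <= n)%N ->
  seqmax [seq seqmin [seq projI r y K i + lam * CIJ K L / (ilen K)%:R
                     | K <- intervals n & in_int i K && sub_int K L]
         | L <- intervals n & in_int i L]
  <=
  seqmin [seq seqmax [seq projI r y K i - lam * CIJ K L / (ilen K)%:R
                     | K <- intervals n & in_int i K && sub_int K L]
         | L <- intervals n & in_int i L].
Proof.
move=> hn hlam /andP [hi1 hi2].
have ii : (i, i) \in [seq L <- intervals n | in_int i L].
  by rewrite mem_filter /in_int /= mem_intervals leqnn hi1 hi2.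
apply: maxmin; first by apply/eqP => E; rewrite E in ii.
move=> [a b] [a' b'] hL hL'.
move: hL; rewrite mem_filter mem_intervals /in_int /= => /andP [hiL hL]. move: hL'; rewrite mem_filter mem_intervals /in_int /= => /andP [hiL' hL'].
set I := (maxn a a', minn b b').
have hI : forall c d, (c, d) = (a, b) \/ (c, d) = (a', b') ->
   I \in [seq K <- intervals n | in_int i K && sub_int K (c, d)].
  move=> c d H; rewrite mem_filter /I mem_intervals /in_int /sub_int /=.
  case: H => [[-> ->]|[-> ->]]; apply/andP; split; lia.
apply: le_trans (seqmin_le _ _ _ (map_f _ (hI a b (or_introl erefl)))) _.
apply: le_trans _ (seqmax_ge _ _ _ (map_f _ (hI a' b' (or_intror erefl)))).
rewrite lerD2l.
have hC : CIJ I (a, b) + CIJ I (a', b') <= 0 :> R by apply: C_sum; lia.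
set l := (ilen I)%:R.
have E : lam * CIJ I (a, b) / l + lam * CIJ I (a', b') / l
   = (lam * (CIJ I (a, b) + CIJ I (a', b'))) / l by rewrite mulrDr mulrDl.
have N : (lam * (CIJ I (a, b) + CIJ I (a', b'))) / l <= 0.
  by apply: mulr_le0_ge0; [apply: mulr_ge0_le0 | rewrite invr_ge0 ler0n].
lra.
Qed.
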